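(* Let $p(\mathbf{x};\theta)=f(\mathbf{x};\theta)/z(\theta)$ be a pairwise exponential family graphical model with parameter $\theta\in\Theta$, let $\phi=\mathrm{diag}(\theta)$, $\mu=z(\theta)/z(\phi)$, let $n\ge 1$ be an integer, $\gamma_k=\binom{n+k-1}{k}$, and let $\nu>0$. Let $\widetilde{T}_1,\widetilde{T}_2,\ldots$ be i.i.d. copies of $\widetilde{T}=\frac1N\sum_{i=1}^N f(\mathbf{y}_i;\theta)/f(\mathbf{y}_i;\phi)$ with $\mathbf{y}_i\overset{iid}{\sim}p(\cdot;\phi)$, let $U_k=\prod_{j=1}^k(1-\nu\widetilde{T}_j)$ (with $U_0=1$), let $R$ be a nonnegative-integer-valued random variable independent of the $\widetilde{T}_j$ with $\mathbb{P}(R\ge k)>0$ for all $k$, and set $$T=\sum_{k=0}^{R}\frac{\gamma_k}{\mathbb{P}(R\ge k)}\,U_k .$$ Suppose $\nu$ is such that $\mathbb{E}|1-\nu\widetilde{T}|<1$. Then $\mathbb{E}(|T|)<\infty$.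
   Context: A pairwise exponential family graphical model (PEGM) on $\mathbf{x}=(x_1,\dots,x_p)$ has unnormalized density $f(\mathbf{x};\theta)=\exp\{\sum_j T(x_j)\theta_{jj}+\sum_{j\ne k}T(x_j,x_k)\theta_{jk}\}$ with respect to a dominating measure, where $T(\cdot)$ and $T(\cdot,\cdot)$ are fixed sufficient statistics, $\theta\in\mathbb{R}^{p\times p}$, $z(\theta)=\int f(\mathbf{x};\theta)\,d\mathbf{x}$, and $\Theta=\{\theta: z(\theta)<\infty\}$. For $\theta\in\Theta$, $\phi=\mathrm{diag}(\theta)$ denotes the matrix with the same diagonal as $\theta$ and all off-diagonal entries zero (the independence model), assumed to lie in $\Theta$. $N\ge1$ is an integer. *)

(* Defs.v *)
From HB Require Import structures.
From mathcomp Require Import all_boot all_order all_algebra.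
From mathcomp Require Import all_classical all_reals all_analysis.
Set Implicit Arguments. Unset Strict Implicit. Unset Printing Implicit Defensive.
Import Order.TTheory GRing.Theory Num.Theory.
Local Open Scope classical_set_scope.
Local Open Scope ring_scope.

Section PEGM.
Context {R : realType} {d : measure_display} {X : measurableType d} {p : nat}.

(* unnormalized PEGM density f(x;theta): the point x in X has coordinates
   coord x j (j < p); T1 = T(.), T2 = T(.,.) *)
Definition pegm_f (coord : X -> 'I_p -> R) (T1 : R -> R) (T2 : R -> R -> R)
  (theta : 'M[R]_p) (x : X) : R :=
  expR (\sum_(j < p) T1 (coord x j) * theta j j
        + \sum_(j < p) \sum_(k < p | k != j) T2 (coord x j) (coord x k) * theta j k).

Definition pegm_z (lam : {measure set X -> \bar R}) (coord : X -> 'I_p -> R)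
  (T1 : R -> R) (T2 : R -> R -> R) (theta : 'M[R]_p) : \bar R :=
  (\int[lam]_x (pegm_f coord T1 T2 theta x)%:E)%E.

Definition diagpart (theta : 'M[R]_p) : 'M[R]_p :=
  \matrix_(j, k) (if j == k then theta j k else 0).

End PEGM.

(* Mutual independence of the family {R} u {y_(j,i) : j in nat, i < N}:
   product rule for every finite subfamily (missing members of the family
   are covered by taking the whole space as their event). *)
Definition mutually_indep {R : realType} {dO : measure_display} {Omega : measurableType dO}
  {d : measure_display} {X : measurableType d} {N : nat}
  (P : probability Omega R) (y : nat -> 'I_N -> Omega -> X) (Rr : Omega -> nat) : Prop :=
  forall (s : seq (nat * 'I_N)) (A : nat -> 'I_N -> set X) (B : set nat),
    uniq s -> (forall j i, measurable (A j i)) ->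
    P (Rr @^-1` B `&` \big[setI/setT]_(ji <- s) (y ji.1 ji.2 @^-1` A ji.1 ji.2))
    = (fine (P (Rr @^-1` B)) * \prod_(ji <- s) fine (P (y ji.1 ji.2 @^-1` A ji.1 ji.2)))%:E.

(* Main.v *)
Require Import Defs.
From HB Require Import structures.
From mathcomp Require Import all_boot all_order all_algebra.
From mathcomp Require Import all_classical all_reals all_analysis.
From mathcomp Require Import measurable_realfun.
Import Order.TTheory GRing.Theory Num.Theory.
Local Open Scope classical_set_scope.
Local Open Scope ring_scope.
Section transfer.
Context {R : realType} {dO d : measure_display} {Omega : measurableType dO}
  {T : measurableType d} (mu : {measure set Omega -> \bar R}).
Import HBNNSimple.

Lemma transfer_lim (H : Omega -> R) (Yv : Omega -> T) (g : T -> R)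
  (gn : {nnsfun T >-> R}^nat)
  (mH : measurable_fun setT H) (H0 : forall w, 0 <= H w)
  (mYv : measurable_fun setT Yv)
  (ndg : forall t, {homo (fun n => gn n t) : n m / (n <= m)%N >-> n <= m})
  (cv : forall t, (EFin \o (fun n => gn n t)) @ \oo --> (g t)%:E) :
  (\int[mu]_w (H w * g (Yv w))%:E =
  limn (fun n => \sum_(r \in range (gn n)) r%:E *
     \int[mu]_w (H w * \1_(gn n @^-1` [set r]) (Yv w))%:E))%E.
Proof.
have -> : (fun w => (H w * g (Yv w))%:E) =
    (fun w => limn (fun n => (H w * gn n (Yv w))%:E)).
  apply/funext => w; apply/esym/cvg_lim => //.
  under eq_fun do rewrite EFinM.
  rewrite EFinM; apply: cvgeZl => //; exact: cv.
rewrite monotone_convergence //; last 3 first.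
- move=> n; apply/measurable_EFinP; apply: measurable_funM => //.
  exact: measurableT_comp.
- by move=> n w _; rewrite lee_fin mulr_ge0.
- by move=> w _ a b ab; rewrite lee_fin ler_wpM2l //; exact: ndg.
congr (limn _); apply/funext => n.
have mi r : measurable_fun setT (fun w => H w * \1_(gn n @^-1` [set r]) (Yv w)).
  apply: measurable_funM => //; apply: measurableT_comp => //.
transitivity (\int[mu]_w (\sum_(r \in range (gn n))
     (r * (H w * \1_(gn n @^-1` [set r]) (Yv w)))%:E))%E.
  apply: eq_integral => w _; rewrite fsumEFin; last exact: fimfunP.
  rewrite fimfunE mulr_fsumr; congr EFin; apply: eq_fsbigr => r _.
  by rewrite mulrCA.
rewrite ge0_integral_fsum //; last 2 first.
- move=> r; apply/measurable_EFinP; apply: measurable_funM => //.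
- move=> r w _; rewrite lee_fin.
  have [r0|r0] := leP 0 r; first by rewrite mulr_ge0 // mulr_ge0.
  by rewrite preimage_nnfun0 // indic0 !mulr0.
apply: eq_fsbigr => r; rewrite inE => -[t _ <-].
rewrite -ge0_integralZl_EFin //.
- by move=> w _; rewrite lee_fin mulr_ge0 // indicE; case: (_ \in _).
- by apply/measurable_EFinP.
Qed.

Lemma transfer (H1 H2 : Omega -> R) (Y1 Y2 : Omega -> T)
  (mH1 : measurable_fun setT H1) (H10 : forall w, 0 <= H1 w)
  (mH2 : measurable_fun setT H2) (H20 : forall w, 0 <= H2 w)
  (mY1 : measurable_fun setT Y1) (mY2 : measurable_fun setT Y2)
  (hyp : forall D, measurable D ->
     (\int[mu]_w (H1 w * \1_D (Y1 w))%:E = \int[mu]_w (H2 w * \1_D (Y2 w))%:E)%E)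
  (g : T -> R) (mg : measurable_fun setT g) (g0 : forall t, 0 <= g t) :
  (\int[mu]_w (H1 w * g (Y1 w))%:E = \int[mu]_w (H2 w * g (Y2 w))%:E)%E.
Proof.
have mg' : measurable_fun setT (EFin \o g) by apply/measurable_EFinP.
pose gn := nnsfun_approx measurableT mg'.
have ndg t : {homo (fun n => gn n t) : n m / (n <= m)%N >-> n <= m}.
  by move=> a b ab; exact/lefP/nd_nnsfun_approx.
have cv t : (EFin \o (fun n => gn n t)) @ \oo --> (g t)%:E.
  by apply: cvg_nnsfun_approx => // x _; rewrite lee_fin.
rewrite (transfer_lim H1 Y1 g gn mH1 H10 mY1 ndg cv) (transfer_lim H2 Y2 g gn mH2 H20 mY2 ndg cv).
congr (limn _); apply/funext => n; apply: eq_fsbigr => r _; congr (_ * _)%E.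
apply: hyp; rewrite -[X in measurable X]setTI; exact: (measurable_funP (gn n)).
Qed.
End transfer.

Lemma bigsetI_mem {T : Type} {I : eqType} (s : seq I) (S : I -> set T) :
  \big[setI/setT]_(x <- s) S x = [set w | forall x, x \in s -> S x w].
Proof.
elim: s => [|a s IH]; rewrite ?big_nil ?big_cons; apply/seteqP; split => w //=.
- move=> [Sa]; rewrite IH /= => Hs x; rewrite in_cons => /orP[/eqP -> //|xs].
  exact: Hs.
- move=> H; split; first by apply: H; rewrite mem_head.
  by rewrite IH => x xs; apply: H; rewrite in_cons xs orbT.
Qed.

Section pmeas.
Context {R : realType} {d1 d2 : measure_display} {T1 : measurableType d1}
  {T2 : measurableType d2} (mu : {measure set T1 -> \bar R}) (E : set T1)
  (f : T1 -> T2).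
Definition pmeas (mE : measurable E) (mf : measurable_fun setT f) (A : set T2) :=
  mu (E `&` f @^-1` A).
Variables (mE : measurable E) (mf : measurable_fun setT f).
Local Notation pm := (pmeas mE mf).
Let mpre A : measurable A -> measurable (E `&` f @^-1` A).
Proof. by move=> mA; apply: measurableI => //; rewrite -[X in measurable X]setTI; exact: mf. Qed.
Let pm0 : pm set0 = 0%E. Proof. by rewrite /pmeas preimage_set0 setI0 measure0. Qed.
Let pm_ge0 A : (0 <= pm A)%E.
Proof. by rewrite /pmeas measure_ge0. Qed.
Let pm_sa : semi_sigma_additive pm.
Proof.
move=> F mF tF mUF; rewrite /pmeas preimage_bigcup setI_bigcupr.
apply: measure_semi_sigma_additive.
- by move=> n; exact: mpre.
- apply/trivIsetP => /= i j _ _ ij; rewrite setIACA setIid -preimage_setI.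
  by move/trivIsetP : tF => /(_ _ _ _ _ ij) ->//; rewrite preimage_set0 setI0.
- by rewrite -setI_bigcupr -preimage_bigcup; exact: mpre.
Qed.
HB.instance Definition _ := isMeasure.Build _ _ _ pm pm0 pm_ge0 pm_sa.
End pmeas.

Section Indep.
Context {R : realType} {dO : measure_display} {Omega : measurableType dO}
  (P : probability Omega R) {d : measure_display} {X : measurableType d}
  {N : nat} (y : nat -> 'I_N -> Omega -> X) (Rr : Omega -> nat).
Hypotheses (hy_meas : forall j i, measurable_fun setT (y j i))
  (hR : forall B, measurable (Rr @^-1` B))
  (hindep : mutually_indep P y Rr)
  (hid : forall j i A, measurable A -> P (y j i @^-1` A) = P (y 0 i @^-1` A)).

Definition Yt j w : N.-tuple X := [tuple y j i w | i < N].

Lemma mYt j : measurable_fun setT (Yt j).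
Proof.
apply/measurable_fun_tnthP => i.
have -> : (@tnth _ _ ^~ i \o Yt j) = y j i.
  by apply/funext => w; rewrite /= tnth_mktuple.
exact: hy_meas.
Qed.

Definition rect (F : 'I_N -> set X) : set (N.-tuple X) :=
  [set t | forall i, F i (tnth t i)].
Definition IC k (C : nat -> set (N.-tuple X)) : set Omega :=
  [set w | forall j, (j < k)%N -> C j (Yt j w)].

Lemma fineP (A : set Omega) : measurable A -> P A = (fine (P A))%:E.
Proof. by move=> mA; rewrite fineK // fin_num_measure. Qed.

Lemma rectE F : rect F = \big[setI/setT]_(i <- enum 'I_N) (@tnth _ _ ^~ i @^-1` F i).
Proof.
rewrite bigsetI_mem; apply/seteqP; split => t /= H i //.
by apply: H; rewrite mem_enum.
Qed.

Lemma mrect F : (forall i, measurable (F i)) -> measurable (rect F).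
Proof.
move=> mF; rewrite rectE; apply: bigsetI_measurable => i _.
rewrite -[X in measurable X]setTI; exact: measurable_tnth.
Qed.

Lemma indep_block j (F : 'I_N -> set X) (mF : forall i, measurable (F i)) :
  fine (P (Yt 0 @^-1` rect F)) =
  \prod_(i <- enum 'I_N) fine (P (y j i @^-1` F i)).
Proof.
have E1 : \big[setI/setT]_(ji <- [seq (0%N, i) | i <- enum 'I_N])
     (y ji.1 ji.2 @^-1` F ji.2) = Yt 0 @^-1` rect F.
  rewrite big_map bigsetI_mem; apply/seteqP; split => w /= H i.
  - by rewrite tnth_mktuple; apply: H; rewrite mem_enum.
  - by move=> _; have := H i; rewrite tnth_mktuple.
have := hindep [seq (0%N, i) | i <- enum 'I_N] (fun _ i => F i) setT _ _.
rewrite E1 preimage_setT setTI probability_setT /= mul1r big_map => ->.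
- rewrite /=; apply: eq_bigr => i _; by rewrite hid.
- rewrite map_inj_uniq ?enum_uniq //; by move=> a b [].
- by [].
Qed.
Lemma indep_rect k (B : set nat) (F : nat -> 'I_N -> set X)
  (mF : forall j i, measurable (F j i)) :
  P (Rr @^-1` B `&` IC k (fun j => rect (F j))) =
  (fine (P (Rr @^-1` B)) * \prod_(j < k) fine (P (Yt 0 @^-1` rect (F j))))%:E.
Proof.
pose s := [seq (j, i) | j <- iota 0 k, i <- enum 'I_N].
have us : uniq s.
  by apply: allpairs_uniq; [exact: iota_uniq | exact: enum_uniq | move=> [a b] [c e] _ _].
have Es : IC k (fun j => rect (F j)) =
    \big[setI/setT]_(ji <- s) (y ji.1 ji.2 @^-1` F ji.1 ji.2).
  rewrite bigsetI_mem; apply/seteqP; split => w /= H.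
  - move=> [j i] /allpairsP [[j' i'] [/= + _ [-> ->]]].
    rewrite mem_iota add0n => /andP[_ j'k].
    by have := H j' j'k i'; rewrite tnth_mktuple.
  - move=> j jk i; rewrite tnth_mktuple; apply: (H (j, i)).
    apply/allpairsP; exists (j, i); split => //.
    + by rewrite mem_iota add0n jk.
    + by rewrite mem_enum.
rewrite Es hindep //; congr EFin; congr (_ * _).
rewrite big_allpairs /=.
rewrite -(big_mkord xpredT (fun j => fine (P (Yt 0 @^-1` rect (F j))))).
by rewrite /index_iota subn0; apply: eq_bigr => j _; rewrite (indep_block j).
Qed.

Definition Grect : set (set (N.-tuple X)) :=
  [set A | exists F, (forall i, measurable (F i)) /\ A = rect F].

Lemma mGrect : (measurable : set (set (N.-tuple X))) = <<s Grect >>.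
Proof.
apply/seteqP; split.
- apply: smallest_sub; first exact: smallest_sigma_algebra.
  move=> A; rewrite -bigcup_seq => -[i _ [B mB <-]]; apply: sub_sigma_algebra.
  exists (fun i' => if i' == i then B else setT); split.
    by move=> i'; case: ifP.
  apply/seteqP; split => t /=.
  + by move=> [_ Bt] i'; case: ifP => // /eqP ->.
  + by move=> H; split => //; have := H i; rewrite eqxx.
- apply: smallest_sub; first exact: sigma_algebra_measurable.
  by move=> A [F [mF ->]]; exact: mrect.
Qed.

Lemma setI_Grect : setI_closed Grect.
Proof.
move=> A B [F [mF ->]] [F' [mF' ->]]; exists (fun i => F i `&` F' i); split.
  by move=> i; exact: measurableI.
by apply/seteqP; split => t /=; [move=> [H H'] i; split|move=> H; split => i; case: (H i)].
Qed.

Lemma mIC k (C : nat -> set (N.-tuple X)) (Q : nat -> bool) :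
  (forall j, measurable (C j)) ->
  measurable [set w | forall j, (j < k)%N -> Q j -> C j (Yt j w)].
Proof.
move=> mC.
have -> : [set w | forall j, (j < k)%N -> Q j -> C j (Yt j w)] =
   \bigcap_j (if (j < k)%N && Q j then Yt j @^-1` C j else setT).
  apply/seteqP; split => w /= H j.
  - by move=> _; case: ifP => // /andP[jk qj]; exact: H.
  - by move=> jk qj; have := H j I; rewrite jk qj.
apply: bigcapT_measurable => j; case: ifP => // _.
rewrite -[X in measurable X]setTI; exact: mYt.
Qed.

Lemma mIC' k (C : nat -> set (N.-tuple X)) :
  (forall j, measurable (C j)) -> measurable (IC k C).
Proof.
move=> mC; have := mIC k C (fun _ => true) mC.
congr measurable; apply/seteqP; split => w /= H j jk.
- exact: (H j jk isT).
- by move=> _; exact: H.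
Qed.

Lemma prod_split k m (mk : (m < k)%N) (h : nat -> R) :
  \prod_(j < k) h j = h m * \prod_(j < k | (j : nat) != m) h j.
Proof.
by rewrite (bigD1 (Ordinal mk)) //=.
Qed.

Definition upd (C : nat -> set (N.-tuple X)) m D := fun j => if j == m then D else C j.

Lemma indep_sets_step k m :
  (forall B C, (forall j, measurable (C j)) ->
     (forall j, (m <= j)%N -> (j < k)%N -> Grect (C j)) ->
     P (Rr @^-1` B `&` IC k C) =
     (fine (P (Rr @^-1` B)) * \prod_(j < k) fine (P (Yt 0 @^-1` C j)))%:E) ->
  (forall B C, (forall j, measurable (C j)) ->
     (forall j, (m.+1 <= j)%N -> (j < k)%N -> Grect (C j)) ->
     P (Rr @^-1` B `&` IC k C) =
     (fine (P (Rr @^-1` B)) * \prod_(j < k) fine (P (Yt 0 @^-1` C j)))%:E).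
Proof.
move=> IH B C mC GC.
have [mk|km] := ltnP m k; last first.
  apply: IH => // j mj jk; apply: GC => //; exfalso.
  by move: (leq_trans jk km); rewrite leqNgt ltnS mj.
pose E := Rr @^-1` B `&` [set w | forall j, (j < k)%N -> j != m -> C j (Yt j w)].
have mE : measurable E by apply: measurableI => //; exact: mIC.
pose c := fine (P (Rr @^-1` B)) *
   \prod_(j < k | (j : nat) != m) fine (P (Yt 0 @^-1` C j)).
have c0 : 0 <= c.
  apply: mulr_ge0; first exact: fine_ge0.
  by apply: prodr_ge0 => j _; exact: fine_ge0.
pose m1 := pmeas P E (Yt m) mE (mYt m).
pose m2 := mscale (NngNum c0) (pmeas P setT (Yt 0) measurableT (mYt 0)).
have m1E D : m1 D = P (Rr @^-1` B `&` IC k (upd C m D)).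
  rewrite /m1 /pmeas; congr (P _); apply/seteqP; split => w /=.
  - move=> [[Bw H] Dw]; split => // j jk; rewrite /upd; case: eqP => [->//|/eqP jm].
    exact: H.
  - move=> [Bw H]; split; first split => //.
      by move=> j jk jm; have := H j jk; rewrite /upd (negbTE jm).
    by have := H m mk; rewrite /upd eqxx.
have m2E D : measurable D -> m2 D = (c * fine (P (Yt 0 @^-1` D)))%:E.
  move=> mD; have mYD : measurable (Yt 0 @^-1` D).
    by rewrite -[X in measurable X]setTI; exact: mYt.
  by rewrite /m2 /mscale /pmeas /= setTI (fineP _ mYD) /= EFinM.
have prodE D : \prod_(j < k) fine (P (Yt 0 @^-1` upd C m D j)) =
    fine (P (Yt 0 @^-1` D)) * \prod_(j < k | (j : nat) != m) fine (P (Yt 0 @^-1` C j)).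
  rewrite (prod_split k m mk (fun j => fine (P (Yt 0 @^-1` upd C m D j)))) /upd eqxx.
  by congr (_ * _); apply: eq_bigr => j /negbTE ->.
have eqm : forall A, measurable A -> m1 A = m2 A.
  apply: (measure_unique Grect (fun _ => setT)).
  - exact: mGrect.
  - exact: setI_Grect.
  - move=> _; exists (fun _ => setT); split => //.
    by apply/seteqP; split.
  - by rewrite bigcup_const.
  - move=> A GA; have [F [mF ->]] := GA.
    transitivity (P (Rr @^-1` B `&` IC k (upd C m (rect F)))); first exact: m1E.
    transitivity ((c * fine (P (Yt 0 @^-1` rect F)))%:E); last first.
      by symmetry; apply: m2E; exact: mrect.
    rewrite IH //.
    + by congr EFin; rewrite prodE /c -mulrA [X in _ * X]mulrC.
    + by move=> j; rewrite /upd; case: ifP => // _; exact: mrect.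
    + move=> j mj jk; rewrite /upd; case: eqP => [_|/eqP jm]; first by exists F.
      by apply: GC => //; rewrite ltn_neqAle eq_sym jm.
  - move=> _; rewrite /m1 /pmeas /=; apply: (le_lt_trans (probability_le1 _ _)) => //.
      by apply: measurableI => //; rewrite -[X in measurable X]setTI; exact: mYt.
    exact: ltey.
have -> : IC k C = IC k (upd C m (C m)).
  by congr IC; apply/funext => j; rewrite /upd; case: eqP => // ->.
rewrite -m1E eqm // m2E //.
congr EFin; rewrite (prod_split k m mk (fun j => fine (P (Yt 0 @^-1` C j)))).
by rewrite /c -mulrA [X in _ * X]mulrC.
Qed.

Lemma indep_sets k B C : (forall j, measurable (C j)) ->
  P (Rr @^-1` B `&` IC k C) =
  (fine (P (Rr @^-1` B)) * \prod_(j < k) fine (P (Yt 0 @^-1` C j)))%:E.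
Proof.
suff H : forall m B C, (forall j, measurable (C j)) ->
     (forall j, (m <= j)%N -> (j < k)%N -> Grect (C j)) ->
     P (Rr @^-1` B `&` IC k C) =
     (fine (P (Rr @^-1` B)) * \prod_(j < k) fine (P (Yt 0 @^-1` C j)))%:E.
  move=> mC; apply: (H k B C mC) => j kj jk; exfalso.
  by move: (leq_trans jk kj); rewrite ltnn.
elim => [|m IH]; last exact: indep_sets_step.
move=> B' C' mC GC.
have [F HF] : {F : nat -> 'I_N -> set X &
    forall j, (forall i, measurable (F j i)) /\ ((j < k)%N -> C' j = rect (F j))}.
  apply: (@choice nat ('I_N -> set X) (fun j Fj =>
    (forall i, measurable (Fj i)) /\ ((j < k)%N -> C' j = rect Fj))) => j.
  have [jk|kj] := ltnP j k.
    have [F [mF ->]] := GC j (leq0n _) jk; by exists F.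
  exists (fun _ => setT); split; first by move=> i.
  by [].
have -> : IC k C' = IC k (fun j => rect (F j)).
  apply/seteqP; split => w /= H j jk; have [_ /(_ jk) E] := HF j.
  - by rewrite -E; exact: H.
  - by rewrite E; exact: H.
rewrite indep_rect; last by move=> j i; have [] := HF j.
congr EFin; congr (_ * _); apply: eq_bigr => j _.
by have [_ /(_ (ltn_ord j)) ->] := HF j.
Qed.

Lemma indic_ge0' (A : set Omega) w : 0 <= \1_A w :> R.
Proof. by rewrite indicE ler0n. Qed.

Lemma measurable_prod_ord k (Q : pred 'I_k) (h : 'I_k -> Omega -> R) :
  (forall i, measurable_fun setT (h i)) ->
  measurable_fun setT (fun w => \prod_(i < k | Q i) h i w).
Proof.
move=> mh.
have -> : (fun w => \prod_(i < k | Q i) h i w) =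
    (fun w => \prod_(i <- index_enum 'I_k) (if Q i then h i w else 1)).
  by apply/funext => w; rewrite big_mkcond.
apply: (measurable_prod (h := fun i w => if Q i then h i w else 1)) => i _.
by case: (Q i); [exact: mh | exact: measurable_cst].
Qed.

Lemma indic_prod k (B : set nat) (C : nat -> set (N.-tuple X)) w :
  \1_(Rr @^-1` B) w * \prod_(j < k) \1_(C j) (Yt j w) =
  \1_(Rr @^-1` B `&` IC k C) w :> R.
Proof.
have [h|h] := pselect ((Rr @^-1` B `&` IC k C) w).
  rewrite [RHS]indicE (mem_set h) indicE (mem_set h.1) mul1r big1 // => j _.
  by rewrite indicE mem_set //; apply: h.2.
rewrite [RHS]indicE (memNset h).
have [Bw|Bw] := pselect ((Rr @^-1` B) w); last by rewrite indicE (memNset Bw) mul0r.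
have : ~ IC k C w by move=> H; apply: h.
move/existsNP => [j]; have [jk|kj] := ltnP j k; last by move=> H; exfalso; apply: H.
move=> H; have Cj : ~ C j (Yt j w) by move=> c; apply: H.
rewrite (bigD1 (Ordinal jk)) //= [\1_(C j) _]indicE.
by rewrite (memNset Cj) mul0r mulr0.
Qed.

Definition Fm (g : N.-tuple X -> R) m C j w :=
  if (j < m)%N then g (Yt j w) else \1_(C j) (Yt j w).
Definition vm (fa : R) m C j :=
  if (j < m)%N then fa else fine (P (Yt 0 @^-1` C j)).

Lemma indep_fun k (g : N.-tuple X -> R) (mg : measurable_fun setT g)
  (g0 : forall t, 0 <= g t)
  (hfin : (\int[P]_w (g (Yt 0 w))%:E)%E \is a fin_num) :
  forall m B C, (forall j, measurable (C j)) ->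
  (\int[P]_w (\1_(Rr @^-1` B) w * \prod_(j < k) Fm g m C j w)%:E =
  (fine (P (Rr @^-1` B)) *
     \prod_(j < k) vm (fine (\int[P]_w (g (Yt 0 w))%:E)%E) m C j)%:E)%E.
Proof.
set fa := fine _.
have fa0 : 0 <= fa by apply: fine_ge0; apply: integral_ge0 => w _; rewrite lee_fin.
have mFm m (C : nat -> set (N.-tuple X)) j : (forall j, measurable (C j)) ->
    measurable_fun setT (Fm g m C j).
  move=> mC; rewrite /Fm; case: (j < m)%N; apply: measurableT_comp => //;
    try exact: mYt.
  all: try exact: measurable_indic.
have Fm0 m C j w : 0 <= Fm g m C j w.
  by rewrite /Fm; case: ifP => _ //; exact: indic_ge0'.
elim => [|m IH] B C mC.
  under eq_integral => w _.
    rewrite (_ : \prod_(j < k) Fm g 0 C j w = \prod_(j < k) \1_(C j) (Yt j w)) //.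
    rewrite indic_prod.
    over.
  rewrite integral_indic //; last by apply: measurableI => //; exact: mIC'.
  rewrite setIT.
  transitivity ((fine (P (Rr @^-1` B)) *
     \prod_(j < k) fine (P (Yt 0 @^-1` C j)))%:E); first exact: indep_sets.
  congr (_ * _)%:E; apply: eq_bigr => j _; by rewrite /vm ltn0.
have [km|mk] := leqP k m.
  have E1 j : (j < k)%N -> Fm g m.+1 C j = Fm g m C j.
    by move=> jk; rewrite /Fm ltnS (ltnW (leq_trans jk km)) (leq_trans jk km).
  have E2 j : (j < k)%N -> vm fa m.+1 C j = vm fa m C j.
    by move=> jk; rewrite /vm ltnS (ltnW (leq_trans jk km)) (leq_trans jk km).
  transitivity ((fine (P (Rr @^-1` B)) * \prod_(j < k) vm fa m C j)%:E); last first.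
    by congr (_ * _)%:E; apply: eq_bigr => j _; rewrite E2.
  rewrite -IH //; apply: eq_integral => w _; congr (_ * _)%:E.
  by apply: eq_bigr => j _; rewrite E1.
pose H1 w := \1_(Rr @^-1` B) w * \prod_(j < k | (j : nat) != m) Fm g m C j w.
pose c := fine (P (Rr @^-1` B)) * \prod_(j < k | (j : nat) != m) vm fa m C j.
have c0 : 0 <= c.
  apply: mulr_ge0; first exact: fine_ge0.
  by apply: prodr_ge0 => j _; rewrite /vm; case: ifP => // _; exact: fine_ge0.
have mH1 : measurable_fun setT H1.
  apply: measurable_funM; first exact: measurable_indic.
  by apply: measurable_prod_ord => j; exact: mFm.
have H10 w : 0 <= H1 w.
  by apply: mulr_ge0; [exact: indic_ge0' | apply: prodr_ge0 => j _].
have tr := transfer P H1 (fun _ => c) (Yt m) (Yt 0) mH1 H10 (measurable_cst c)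
  (fun=> c0) (mYt m) (mYt 0).
have key : (\int[P]_w (H1 w * g (Yt m w))%:E = (c * fa)%:E)%E.
  rewrite (tr _ _ mg g0).
    rewrite (_ : (fun w => (c * g (Yt 0 w))%:E) = (fun w => c%:E * (g (Yt 0 w))%:E)%E);
      last by apply/funext => w; rewrite EFinM.
    rewrite ge0_integralZl_EFin //.
    - by rewrite [in RHS]EFinM /fa (fineK hfin).
    - by move=> w _; rewrite lee_fin.
    - by apply/measurable_EFinP; apply: measurableT_comp => //; exact: mYt.
  move=> D mD.
  have mYD : measurable (Yt 0 @^-1` D).
    by rewrite -[X in measurable X]setTI; exact: mYt.
  rewrite (_ : (fun w => (c * \1_D (Yt 0 w))%:E) = (fun w => c%:E * (\1_(Yt 0 @^-1` D) w)%:E)%E);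
    last by apply/funext => w; rewrite EFinM.
  rewrite ge0_integralZl_EFin //;
    try (by move=> w _; rewrite lee_fin; exact: indic_ge0');
    try (by apply/measurable_EFinP; exact: measurable_indic).
  rewrite integral_indic // setIT.
  transitivity ((c * fine (P (Yt 0 @^-1` D)))%:E); last first.
    by rewrite [in LHS]EFinM; congr (_ * _)%E; symmetry; exact: fineP.
  have mCD : forall j, measurable (upd C m D j).
    by move=> j; rewrite /upd; case: ifP.
  have := IH B (upd C m D) mCD.
  rewrite (prod_split k m mk (fun j => vm fa m (upd C m D) j)).
  have -> : vm fa m (upd C m D) m = fine (P (Yt 0 @^-1` D)).
    by rewrite /vm ltnn /upd eqxx.
  rewrite (_ : \prod_(j < k | (j : nat) != m) vm fa m (upd C m D) j =
               \prod_(j < k | (j : nat) != m) vm fa m C j); last first.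
    by apply: eq_bigr => j jm; rewrite /vm /upd (negbTE jm).
  move=> IHD.
  transitivity (\int[P]_w (\1_(Rr @^-1` B) w *
      \prod_(j < k) Fm g m (upd C m D) j w)%:E)%E.
    apply: eq_integral => w _; congr EFin.
    rewrite (prod_split k m mk (fun j => Fm g m (upd C m D) j w)).
    have -> : Fm g m (upd C m D) m w = \1_D (Yt m w) by rewrite /Fm ltnn /upd eqxx.
    rewrite (_ : \prod_(j < k | (j : nat) != m) Fm g m (upd C m D) j w =
                 \prod_(j < k | (j : nat) != m) Fm g m C j w); last first.
      by apply: eq_bigr => j jm; rewrite /Fm /upd (negbTE jm).
    by rewrite /H1 -mulrA [X in _ * X]mulrC.
  by rewrite IHD /c; congr EFin; rewrite -mulrA [X in _ * X]mulrC.
transitivity (\int[P]_w (H1 w * g (Yt m w))%:E)%E.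
  apply: eq_integral => w _; congr EFin.
  rewrite (prod_split k m mk (fun j => Fm g m.+1 C j w)).
  have -> : Fm g m.+1 C m w = g (Yt m w) by rewrite /Fm ltnSn.
  rewrite (_ : \prod_(j < k | (j : nat) != m) Fm g m.+1 C j w =
               \prod_(j < k | (j : nat) != m) Fm g m C j w); last first.
    by apply: eq_bigr => j jm; rewrite /Fm ltnS leq_eqVlt (negbTE jm).
  by rewrite /H1 -mulrA [X in _ * X]mulrC.
rewrite key; congr EFin.
rewrite (prod_split k m mk (fun j => vm fa m.+1 C j)).
have -> : vm fa m.+1 C m = fa by rewrite /vm ltnSn.
rewrite (_ : \prod_(j < k | (j : nat) != m) vm fa m.+1 C j =
             \prod_(j < k | (j : nat) != m) vm fa m C j); last first.
  by apply: eq_bigr => j jm; rewrite /vm ltnS leq_eqVlt (negbTE jm).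
by rewrite /c -mulrA [X in _ * X]mulrC.
Qed.

Lemma indep_pow k (g : N.-tuple X -> R) (mg : measurable_fun setT g)
  (g0 : forall t, 0 <= g t)
  (hfin : (\int[P]_w (g (Yt 0 w))%:E)%E \is a fin_num) :
  (\int[P]_w (\1_(Rr @^-1` [set n | (k <= n)%N]) w * \prod_(j < k) g (Yt j w))%:E =
  (fine (P (Rr @^-1` [set n | (k <= n)%N])) *
     (fine (\int[P]_w (g (Yt 0 w))%:E)) ^+ k)%:E)%E.
Proof.
transitivity (\int[P]_w (\1_(Rr @^-1` [set n | (k <= n)%N]) w *
   \prod_(j < k) Fm g k (fun _ => setT) j w)%:E)%E.
  apply: eq_integral => w _; congr (_ * _)%:E.
  by apply: eq_bigr => j _; rewrite /Fm ltn_ord.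
rewrite (indep_fun k g mg g0 hfin k) //; congr (_ * _)%:E.
under eq_bigr => j _ do rewrite /vm ltn_ord.
by rewrite prodr_const card_ord.
Qed.

End Indep.

Lemma binom_bound {R : realType} (a : R) (a0 : 0 <= a) (a1 : a < 1) (m K : nat) :
  \sum_(k < K) ('C(m + k, k))%:R * a ^+ k <= ((1 - a)^-1) ^+ m.+1.
Proof.
set B := (1 - a)^-1.
have B0 : 0 <= B by rewrite invr_ge0 subr_ge0 ltW.
have hB : 1 + a * B = B.
  have h1 : (1 - a) * B = 1 by rewrite mulfV // subr_eq0 gt_eqF.
  by rewrite -[1 in LHS]h1 -mulrDl subrK mul1r.
have rec m' K' : \sum_(k < K'.+1) ('C(m'.+1 + k, k))%:R * a ^+ k =
    \sum_(k < K'.+1) ('C(m' + k, k))%:R * a ^+ k +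
    a * \sum_(k < K') ('C(m'.+1 + k, k))%:R * a ^+ k.
  rewrite big_ord_recl [X in _ = X + _]big_ord_recl /= !addn0 !bin0 -addrA.
  congr (_ + _); rewrite mulr_sumr -big_split /=; apply: eq_bigr => i _.
  rewrite /bump /= add1n addnS binS natrD mulrDl; congr (_ + _).
    by rewrite addSnnS.
  by rewrite exprS mulrCA.
elim: m K => [|m IHm] K.
  have E K' : \sum_(k < K') ('C(0 + k, k))%:R * a ^+ k = \sum_(k < K') a ^+ k.
    by apply: eq_bigr => k _; rewrite add0n binn mul1r.
  rewrite E; elim: K => [|K IHK]; first by rewrite big_ord0 expr1.
  rewrite big_ord_recl expr0.
  under eq_bigr => i _ do rewrite exprS.
  rewrite -mulr_sumr expr1 -[X in _ <= X]hB lerD2l ler_wpM2l //.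
elim: K => [|K IHK]; first by rewrite big_ord0 exprn_ge0.
rewrite rec; apply: (le_trans (lerD (IHm K.+1) (ler_wpM2l a0 IHK))).
by rewrite [X in _ <= X]exprS [X in _ + a * X]exprS mulrA -{1}[B ^+ m.+1]mul1r -mulrDl hB.
Qed.

Lemma measurable_sum_filter {R : realType} {d0 : measure_display} {T : measurableType d0}
  (k : nat) (Q : pred 'I_k) (h : 'I_k -> T -> R) :
  (forall i, measurable_fun setT (h i)) ->
  measurable_fun setT (fun w => \sum_(i < k | Q i) h i w).
Proof.
move=> mh.
have -> : (fun w => \sum_(i < k | Q i) h i w) =
    (fun w => \sum_(i <- index_enum 'I_k) (if Q i then h i w else 0)).
  by apply/funext => w; rewrite big_mkcond.
apply: (@measurable_sum _ _ _ _ _ _ (fun i w => if Q i then h i w else 0)) => i.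
by case: (Q i); [exact: mh | exact: measurable_cst].
Qed.

Lemma measurable_dep {R : realType} {d0 : measure_display} {T : measurableType d0}
  (Rr : T -> nat) (S : nat -> T -> R) :
  (forall B, measurable (Rr @^-1` B)) -> (forall m, measurable_fun setT (S m)) ->
  measurable_fun setT (fun w => S (Rr w) w).
Proof.
move=> mR mS _ A mA; rewrite setTI.
have -> : (fun w => S (Rr w) w) @^-1` A =
    \bigcup_m (Rr @^-1` [set m] `&` S m @^-1` A).
  apply/seteqP; split => w /=.
  - by move=> Aw; exists (Rr w) => //.
  - by move=> [m _ [/= -> ]].
apply: bigcupT_measurable => m; apply: measurableI => //.
by rewrite -[X in measurable X]setTI; exact: mS.
Qed.

Theorem proposition1
  (R : realType) (d : measure_display) (X : measurableType d) (p : nat)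
  (lam : {measure set X -> \bar R}) (coord : X -> 'I_p -> R)
  (T1 : R -> R) (T2 : R -> R -> R)
  (hT1 : forall j : 'I_p, measurable_fun setT (fun x => T1 (coord x j)))
  (hT2 : forall j k : 'I_p, measurable_fun setT (fun x => T2 (coord x j) (coord x k)))
  (theta : 'M[R]_p)
  (htheta : (pegm_z lam coord T1 T2 theta < +oo)%E)
  (hphi : (pegm_z lam coord T1 T2 (diagpart theta) < +oo)%E)
  (n N : nat) (hn : (1 <= n)%N) (hN : (1 <= N)%N) (nu : R) (hnu : 0 < nu)
  (dO : measure_display) (Omega : measurableType dO) (P : probability Omega R)
  (y : nat -> 'I_N -> Omega -> X) (Rr : Omega -> nat)
  (hy_meas : forall j i, measurable_fun setT (y j i))
  (hy_law : forall j i (A : set X), measurable A ->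
     P (y j i @^-1` A) =
     ((fine (pegm_z lam coord T1 T2 (diagpart theta)))^-1%:E *
      \int[lam]_(x in A) (pegm_f coord T1 T2 (diagpart theta) x)%:E)%E)
  (hR_meas : forall B : set nat, measurable (Rr @^-1` B))
  (hR_pos : forall k : nat, (0 < P [set w | (k <= Rr w)%N])%E)
  (hindep : mutually_indep P y Rr) :
  let f := pegm_f coord T1 T2 in
  let phi := diagpart theta in
  (* Ttil j = the (j+1)-th i.i.d. copy of the importance-sampling estimator *)
  let Ttil := fun (j : nat) (w : Omega) =>
    N%:R^-1 * \sum_(i < N) f theta (y j i w) / f phi (y j i w) in
  let gamma := fun k : nat => ('C(n + k - 1, k))%:R : R in
  let U := fun (k : nat) (w : Omega) => \prod_(j < k) (1 - nu * Ttil j w) in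
  let T := fun w : Omega =>
    \sum_(k < (Rr w).+1) gamma k / fine (P [set w' | (k <= Rr w')%N]) * U k w in
  (\int[P]_w (`|1 - nu * Ttil 0%N w|)%:E < 1%:E)%E ->
  P.-integrable setT (fun w => (T w)%:E).
Proof.
move=> f phi Ttil gamma U T Ha.
pose s (th : 'M[R]_p) (x : X) := \sum_(j < p) T1 (coord x j) * th j j
  + \sum_(j < p) \sum_(k < p | k != j) T2 (coord x j) (coord x k) * th j k.
have ms th : measurable_fun setT (s th).
  apply: measurable_funD.
    apply: (@measurable_sum _ _ _ _ _ _ (fun j x => T1 (coord x j) * th j j)) => j.
    by apply: measurable_funM => //; exact: measurable_cst.
  apply: (@measurable_sum _ _ _ _ _ _ (fun j x =>
     \sum_(k < p | k != j) T2 (coord x j) (coord x k) * th j k)) => j.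
  apply: (measurable_sum_filter _ _ (fun k x => T2 (coord x j) (coord x k) * th j k)).
  by move=> k; apply: measurable_funM => //; exact: measurable_cst.
pose q x := f theta x / f phi x.
have mq : measurable_fun setT q.
  have -> : q = (fun x => expR (s theta x - s phi x)).
    by apply/funext => x; rewrite expRB.
  apply: measurableT_comp; first exact: measurable_expR.
  exact: measurable_funB.
pose tg (t : N.-tuple X) := N%:R^-1 * \sum_(i < N) q (tnth t i).
have mtg : measurable_fun setT tg.
  apply: measurable_funM; first exact: measurable_cst.
  apply: (@measurable_sum _ _ _ _ _ _ (fun i t => q (tnth t i))) => i.
  apply: measurableT_comp => //; exact: measurable_tnth.
pose zg t := `|1 - nu * tg t|.
have mzg : measurable_fun setT zg.
  apply: measurableT_comp; first exact: normr_measurable.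
  apply: measurable_funB; first exact: measurable_cst.
  by apply: measurable_funM; [exact: measurable_cst | exact: mtg].
have zg0 t : 0 <= zg t by rewrite /zg normr_ge0.
have TtilE j w : Ttil j w = tg (Yt y j w).
  rewrite /Ttil /tg; congr (_ * _); apply: eq_bigr => i _.
  by rewrite tnth_mktuple.
have Zj j w : `|1 - nu * Ttil j w| = zg (Yt y j w) by rewrite TtilE.
have hid j i A : measurable A -> P (y j i @^-1` A) = P (y 0%N i @^-1` A).
  by move=> mA; rewrite !hy_law.
set a := (\int[P]_w (zg (Yt y 0%N w))%:E)%E.
have Ha' : (a < 1%:E)%E.
  rewrite /a (_ : (fun w => (zg (Yt y 0 w))%:E) =
     (fun w => (`|1 - nu * Ttil 0%N w|)%:E)) //.
  by apply/funext => w; rewrite Zj.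
have a0 : (0 <= a)%E by apply: integral_ge0 => w _; rewrite lee_fin.
have hfin : a \is a fin_num by rewrite ge0_fin_numE // (lt_trans Ha' (ltey _)).
set fa := fine a.
have fa0 : 0 <= fa := fine_ge0 a0.
have fa1 : fa < 1 by rewrite -lte_fin /fa fineK.
have key k := indep_pow P y Rr hy_meas hR_meas hindep hid k zg mzg zg0 hfin.
have mRk k : measurable [set w | (k <= Rr w)%N] := hR_meas [set n | (k <= n)%N].
pose c k := gamma k / fine (P [set w | (k <= Rr w)%N]).
have Pk k : 0 < fine (P [set w | (k <= Rr w)%N]).
  apply: fine_gt0; rewrite hR_pos /=.
  exact: (le_lt_trans (probability_le1 P (mRk k)) (ltey _)).
have c0 k : 0 <= c k by rewrite /c divr_ge0 // ltW.
have cE k : c k * fine (P [set w | (k <= Rr w)%N]) = gamma k.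
  by rewrite /c divfK // gt_eqF.
pose G k w := (c k * (\1_(Rr @^-1` [set n | (k <= n)%N]) w *
  \prod_(j < k) zg (Yt y j w)))%:E.
have mG k : measurable_fun setT (G k).
  apply/measurable_EFinP; apply: measurable_funM; first exact: measurable_cst.
  apply: measurable_funM; first exact: measurable_indic.
  apply: (@measurable_prod _ _ _ _ _ _ (fun (j : 'I_k) w => zg (Yt y j w))) => j _.
  apply: measurableT_comp => //; exact: mYt.
have G0 k w : (0 <= G k w)%E.
  rewrite lee_fin; apply: mulr_ge0 => //; apply: mulr_ge0.
  - by rewrite indicE ler0n.
  - by apply: prodr_ge0 => j _.
have intG k : (\int[P]_w G k w = (gamma k * fa ^+ k)%:E)%E.
  rewrite /G; under eq_integral do rewrite EFinM.
  rewrite ge0_integralZl_EFin //; last 2 first.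
  - move=> w _; rewrite lee_fin; apply: mulr_ge0.
    + by rewrite indicE ler0n.
    + by apply: prodr_ge0 => j _.
  - apply/measurable_EFinP; apply: measurable_funM; first exact: measurable_indic.
    apply: (@measurable_prod _ _ _ _ _ _ (fun (j : 'I_k) w => zg (Yt y j w))) => j _.
    apply: measurableT_comp => //; exact: mYt.
  rewrite key -EFinM mulrA; congr EFin; rewrite -(cE k).
  by [].
have HT w : ((`|T w|)%:E <= \sum_(k <oo) G k w)%E.
  apply: le_trans (nneseries_lim_ge (Rr w).+1 _); last by move=> k _ _; exact: G0.
  rewrite big_mkord sumEFin lee_fin /T.
  apply: le_trans (ler_norm_sum _ _ _) _; apply: ler_sum => k _.
  rewrite normrM ger0_norm; last exact: (c0 k).
  rewrite indicE mem_set ?mul1r; last by rewrite /= -ltnS.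
  rewrite /U normr_prod; under eq_bigr do rewrite Zj.
  by [].
have mT : measurable_fun setT T.
  apply: (measurable_dep Rr (fun m w => \sum_(k < m.+1)
     gamma k / fine (P [set w' | (k <= Rr w')%N]) * U k w)) => // m.
  apply: (@measurable_sum _ _ _ _ _ _
     (fun (k : 'I_m.+1) w => gamma k / fine (P [set w' | (k <= Rr w')%N]) * U k w)) => k.
  apply: measurable_funM; first exact: measurable_cst.
  apply: (@measurable_prod _ _ _ _ _ _ (fun (j : 'I_k) w => 1 - nu * Ttil j w)) => j _.
  apply: measurable_funB; first exact: measurable_cst.
  apply: measurable_funM; first exact: measurable_cst.
  have -> : Ttil j = tg \o Yt y j by apply/funext => w; rewrite /= TtilE.
  by apply: measurableT_comp => //; exact: mYt.
apply/integrableP; split; first exact/measurable_EFinP.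
apply: (@le_lt_trans _ _ (\int[P]_w \sum_(k <oo) G k w)%E).
  apply: ge0_le_integral => //.
  - apply/measurable_EFinP; exact: measurableT_comp.
  - exact: (ge0_emeasurable_sum (h := G) (P := xpredT)).
  - by move=> w _; exact: HT.
rewrite integral_nneseries //.
rewrite (eq_eseriesr (fun k _ => intG k)).
have [m nE] : exists m, n = m.+1 by case: (n) hn => [//|m] _; exists m.
apply: (@le_lt_trans _ _ ((((1 - fa)^-1) ^+ m.+1)%R%:E)); last exact: ltey.
apply: lime_le.
  by apply: is_cvg_nneseries => k _ _; rewrite lee_fin /gamma mulr_ge0 ?ler0n ?exprn_ge0.
near=> K.
rewrite sumEFin lee_fin big_mkord.

apply: le_trans _ (@binom_bound _ fa fa0 fa1 m K).
apply: ler_sum => k _; rewrite /gamma nE addSn subn1 /=.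
exact: lexx.
Unshelve. all: by end_near.
Qed.
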